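(* Assume $l>1$. For every partition $\mu$ and every $i\in\mathbb{Z}/l\mathbb{Z}$ one has $\mathfrak{d}(\sigma_i*\mu)=\sigma_i*\mathfrak{d}(\mu)$. That is, the map $\mathfrak{d}:\mathcal{P}\to\mathbb{Z}^l$ is $\tilde S_l$-equivariant. The same holds for its restriction $\mathfrak{d}:\heartsuit(l)\to\mathbb{Z}_{\heartsuit}$ to $l$-cores.
   Context: Partitions are identified with Young diagrams $\mathbb{Y}(\mu)=\{(i,j):1\le j\le\mu_i\}$ (English convention). The content of a cell $(i,j)$ is $c(i,j)=j-i$. For a partition $\lambda$ let $N_i(\lambda)$ ($i\in\{0,\dots,l-1\}$) be the number of cells of $\lambda$ of content $\equiv i \pmod l$, and put $\mathfrak{d}(\lambda)=\mathbf{d}_\lambda=(N_0(\lambda),\dots,N_{l-1}(\lambda))$. Let $\mathcal{P}$ be the set of all partitions and $\heartsuit(l)$ the set of $l$-cores (partitions from which no rim-hook of $l$ cells can be removed). Let $\mathbb{Z}_\heartsuit=\{\mathbf{d}_\nu:\nu\in\heartsuit(l)\}$. The affine symmetric group $\tilde S_l$ has Coxeter generators $\sigma_0,\dots,\sigma_{l-1}$ (indices mod $l$) with relations $\sigma_i^2=1$ and $\sigma_i\sigma_{i+1}\sigma_i=\sigma_{i+1}\sigma_i\sigma_{i+1}$. It acts on $\mathcal{P}$ by $\sigma_i*\mu=\mathbf{T}_i(\mu)$. Here $\mathbb{Y}(\mathbf{T}_i(\mu))$ is obtained from $\mathbb{Y}(\mu)$ by adding all addable cells of content $\equiv i\pmod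 l$ and removing all removable cells of content $\equiv i \pmod l$ (a cell is removable if deleting it leaves a Young diagram, and addable if it is not in the diagram and adding it gives a Young diagram). It acts on $\mathbb{Z}^l$ by $\sigma_i*\mathbf{d}=\mathbf{d}'$, where $d'_j=d_j$ for $j\ne i$, $d'_i=d_{i+1}+d_{i-1}-d_i$ if $i\neq0$, and $d'_0=d_1+d_{l-1}-d_0+1$. *)

(* Defs.v *)
From mathcomp Require Import all_boot all_order all_algebra.
Set Implicit Arguments. Unset Strict Implicit. Unset Printing Implicit Defensive.
Import Order.TTheory GRing.Theory Num.Theory.

Definition is_partition (lam : seq nat) : bool :=
  sorted (fun a b => b <= a)%N lam && all (fun k => 0 < k)%N lam.

(* Cells are pairs (row, column), 1-indexed, English convention. *)
Definition cell := (nat * nat)%type.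

Definition in_diag (lam : seq nat) (x : cell) : bool :=
  (0 < x.1 <= size lam)%N && (0 < x.2 <= nth 0 lam x.1.-1)%N.

Definition young (P : cell -> bool) : Prop :=
  exists lam, is_partition lam /\ forall x, P x = in_diag lam x.

Definition removable (lam : seq nat) (x : cell) : Prop :=
  in_diag lam x /\ young (fun y => in_diag lam y && (y != x)).

Definition addable (lam : seq nat) (x : cell) : Prop :=
  ~~ in_diag lam x /\ young (fun y => in_diag lam y || (y == x)).

Definition content (x : cell) : int := (x.2%:Z - x.1%:Z)%R.

Definition cong_mod (l : nat) (c : int) (k : nat) : bool :=
  (l%:Z %| (c - k%:Z)%R)%Z.

Definition T_spec (l i : nat) (lam nu : seq nat) : Prop :=
  is_partition nu /\
  forall x : cell, in_diag nu x <->
    ((in_diag lam x /\ ~ (removable lam x /\ cong_mod l (content x) i))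
     \/ (addable lam x /\ cong_mod l (content x) i)).

Definition cells (lam : seq nat) : seq cell :=
  flatten [seq [seq (r, c) | c <- iota 1 (nth 0 lam r.-1)] | r <- iota 1 (size lam)].

Definition Ncount (l k : nat) (lam : seq nat) : int :=
  (count (fun x => cong_mod l (content x) k) (cells lam))%:Z.

(* d(lam) in Z^l, as a function on indices 0..l-1 *)
Definition dvec (l : nat) (lam : seq nat) : nat -> int := fun k => Ncount l k lam.

Definition sigma_act (l i : nat) (d : nat -> int) : nat -> int :=
  fun j => if j == i then
             (d (i.+1 %% l)%N + d ((i + l).-1 %% l)%N - d i
              + (if i == 0%N then 1 else 0))%R
           else d j.

Definition adj_cell (x y : cell) : bool :=
  ((x.1 == y.1) && ((x.2.+1 == y.2) || (y.2.+1 == x.2))) ||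
  ((x.2 == y.2) && ((x.1.+1 == y.1) || (y.1.+1 == x.1))).

Definition cells_connected (H : seq cell) : Prop :=
  forall a b, a \in H -> b \in H ->
    exists p : seq cell, path adj_cell a p /\ all (mem H) p /\ last a p = b.

Definition no_2x2 (H : seq cell) : Prop :=
  forall x : cell, ~ all (mem H) [:: x; (x.1.+1, x.2); (x.1, x.2.+1); (x.1.+1, x.2.+1)].

Definition rim_hook (lam : seq nat) (H : seq cell) : Prop :=
  uniq H /\ H != [::] /\ all (in_diag lam) H /\
  young (fun y => in_diag lam y && (y \notin H)) /\
  cells_connected H /\ no_2x2 H.

Definition is_core (l : nat) (lam : seq nat) : Prop :=
  ~ exists H, size H = l /\ rim_hook lam H.

(* Main.v *)
Require Import Defs.
From mathcomp Require Import all_boot all_order all_algebra zify.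
Set Implicit Arguments. Unset Strict Implicit. Unset Printing Implicit Defensive.
Import Order.TTheory GRing.Theory Num.Theory.

Lemma in_diagE lam r c : in_diag lam (r,c) = [&& 0 < r, 0 < c & c <= nth 0 lam r.-1].
Proof.
rewrite /in_diag /=.
case: r => [|r] //=; case: c => [|c] //=; rewrite ?andbF //.
case: (ltnP r (size lam)) => h /=; first by [].
by rewrite nth_default.
Qed.

Definition dc (P : cell -> bool) := forall r c r' c', P (r,c) -> 0 < r' -> r' <= r -> 0 < c' -> c' <= c -> P (r',c').
Definition posc (P : cell -> bool) := forall r c, P (r,c) -> 0 < r /\ 0 < c.
Definition bnd (P : cell -> bool) B := forall r c, P (r,c) -> r <= B /\ c <= B.

Lemma in_diag_pos lam : posc (in_diag lam).
Proof. by move=> r c; rewrite in_diagE => /and3P[]. Qed.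

Lemma part_nth lam i j : is_partition lam -> i <= j -> nth 0 lam j <= nth 0 lam i.
Proof.
case/andP=> hs _ hij.
case: (ltnP j (size lam)) => hj; last by rewrite (nth_default 0 hj).
have := @sorted_leq_nth nat (fun a b => b <= a) _ _ 0 lam hs i j.
apply; rewrite ?inE //; try lia.
by move=> a b c' h1 h2; exact: leq_trans h2 h1.
Qed.

Lemma part_dc lam : is_partition lam -> dc (in_diag lam).
Proof.
move=> hp r c r' c'; rewrite !in_diagE => /and3P[h1 h2 h3] h4 h5 h6 h7.
rewrite h4 h6 /=; apply: leq_trans h7 (leq_trans h3 _).
apply: part_nth => //; lia.
Qed.

Lemma dc_of_young P : young P -> dc P /\ posc P.
Proof.
case=> lam [hp hP]; split.
- move=> r c r' c'; rewrite !hP; exact: part_dc.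
- by move=> r c; rewrite hP; apply: in_diag_pos.
Qed.

Lemma local_dc P : posc P ->
  (forall r c, P (r.+1, c) -> 0 < r -> P (r,c)) ->
  (forall r c, P (r, c.+1) -> 0 < c -> P (r,c)) -> dc P.
Proof.
move=> hpos hr hc r c r' c' hP h1 h2 h3 h4.
have hrow : forall k, P (r' + k, c) -> P (r', c).
  elim=> [|k IH]; first by rewrite addn0.
  by move=> h; apply: IH; apply: hr; [rewrite -addnS|lia].
have hcol : forall k, P (r', c' + k) -> P (r', c').
  elim=> [|k IH]; first by rewrite addn0.
  by move=> h; apply: IH; apply: hc; [rewrite -addnS|lia].
apply: (hcol (c - c')); rewrite subnKC //.
by apply: (hrow (r - r')); rewrite subnKC.
Qed.

Lemma init_seg (q : nat -> bool) B :
  (forall m n, q n -> 0 < m <= n -> q m) -> (forall n, q n -> 0 < n <= B) ->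
  forall m, q m = (0 < m) && (m <= count q (iota 1 B)).
Proof.
move=> hdc; elim: B => [|B IH] hb m.
  by apply/idP/idP => [/hb|/andP[h1 h2]]; [lia|]; simpl in h2; lia.
have -> : iota 1 B.+1 = iota 1 B ++ [:: B.+1] by rewrite -[B.+1 in LHS]addn1 iotaD.
rewrite count_cat /= addn0.
case hqB: (q B.+1).
  have hall : count q (iota 1 B) = B.
    rewrite (eq_in_count (a2 := predT)); first by rewrite count_predT size_iota.
    move=> x; rewrite mem_iota => hx; apply: hdc hqB _; lia.
  rewrite hall addn1; apply/idP/idP => [/hb //|/andP[h1 h2]].
  by apply: hdc hqB _; lia.
rewrite addn0; apply: IH => n hn; have := hb n hn.
case/andP=> h1 h2; rewrite h1 /=; rewrite leq_eqVlt in h2; case/orP: h2 => [/eqP e|//].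
by rewrite e hqB in hn.
Qed.

Definition rowlen (P : cell -> bool) B r := count (fun c => P (r,c)) (iota 1 B).

Lemma sorted_map_iota (f : nat -> nat) a n :
  (forall r, a <= r -> f r.+1 <= f r) ->
  sorted (fun x y => y <= x) [seq f r | r <- iota a n].
Proof.
elim: n a => [|n IH] a hf //=.
case: n IH => [|n] IH //=.
rewrite hf //=.
have := IH a.+1 (fun r hr => hf r (ltnW hr)); by [].
Qed.

Lemma young_of P B : posc P -> dc P -> bnd P B -> young P.
Proof.
move=> hpos hdc hb.
pose R := count (fun r => P (r,1)) (iota 1 B).
have hR : forall r, P (r,1) = (0 < r) && (r <= R).
  apply: init_seg => [m n hn hm|n hn].
  - apply: hdc hn _ _ _ _ => //; lia.
  - have := hb _ _ hn; have := hpos _ _ hn; lia.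
have hrow : forall r, 0 < r -> forall c, P (r,c) = (0 < c) && (c <= rowlen P B r).
  move=> r hr; apply: init_seg => [m n hn hm|n hn].
  - apply: hdc hn _ _ _ _ => //; lia.
  - have := hb _ _ hn; have := hpos _ _ hn; lia.
exists [seq rowlen P B r | r <- iota 1 R]; split.
  apply/andP; split.
    apply: sorted_map_iota => r hr; apply: sub_count => c /= h.
    have := hpos _ _ h; move=> [hp1 hp2].
    apply: hdc h _ _ _ _ => //; lia.
  apply/allP => x /mapP[r]; rewrite mem_iota => hr ->.
  have : P (r,1) by rewrite hR; lia.
  by rewrite hrow; [case/andP=> _; apply: leq_trans|lia].
case=> r c; rewrite in_diagE /=.
case: r => [|r]; first by case h: (P (0,c)) => //; case: (hpos _ _ h).
case: (leqP r.+1 R) => hrR.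
  rewrite (nth_map 0) ?size_iota; last lia.
  by rewrite nth_iota; [rewrite add1n hrow|lia].
rewrite nth_default ?size_map ?size_iota /=; last lia.
have : ~~ P (r.+1, 1) by rewrite hR; lia.
case hc: (P (r.+1,c)) => h; last by lia.
have := hpos _ _ hc => -[_ hc0].
by have := hdc _ _ r.+1 1 hc; rewrite (negbTE h); move/(_ erefl (leqnn _) erefl hc0).
Qed.

Definition bl (lam : seq nat) := size lam + nth 0 lam 0.

Lemma bnd_diag lam : is_partition lam -> bnd (in_diag lam) (bl lam).
Proof.
move=> hp r c h; have := h; rewrite /in_diag /= => /andP[/andP[h1 h2] /andP[h3 h4]].
have := part_nth hp (leq0n r.-1); rewrite /bl; lia.
Qed.

Definition remb lam (x : cell) :=
  [&& in_diag lam x, ~~ in_diag lam (x.1.+1, x.2) & ~~ in_diag lam (x.1, x.2.+1)].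
Definition addb lam (x : cell) :=
  [&& 0 < x.1, 0 < x.2, ~~ in_diag lam x, (x.1 == 1) || in_diag lam (x.1.-1, x.2)
    & (x.2 == 1) || in_diag lam (x.1, x.2.-1)].

Lemma removableP lam x : is_partition lam -> removable lam x <-> remb lam x.
Proof.
move=> hp; case: x => r c; split.
- case=> hx /dc_of_young [hdc _]; rewrite /remb hx /=.
  have hpos := in_diag_pos hx.
  apply/andP; split; apply/negP => h.
  + have := hdc r.+1 c r c; rewrite /= h xpair_eqE eqxx andbT /=.
    have -> : (r.+1 == r) = false by lia.
    rewrite eqxx /= andbF => H; have := H isT (proj1 hpos) (leqnSn _) (proj2 hpos) (leqnn _); done.
  + have := hdc r c.+1 r c; rewrite /= h xpair_eqE eqxx /=.
    have -> : (c.+1 == c) = false by lia.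
    rewrite eqxx /= andbF => H; have := H isT (proj1 hpos) (leqnn _) (proj2 hpos) (leqnSn _); done.
- case/and3P=> hx h1 h2; split => //.
  apply: (@young_of _ (bl lam)).
  + by move=> r' c' /andP[h _]; apply: in_diag_pos h.
  + apply: local_dc.
    * by move=> r' c' /andP[h _]; apply: in_diag_pos h.
    * move=> r' c' /andP[h hne] hr; apply/andP; split.
        have := in_diag_pos h => -[? ?]; apply: part_dc h _ _ _ _ => //; lia.
      apply/negP => /eqP [e1 e2]; subst r' c'; by rewrite h in h1.
    * move=> r' c' /andP[h hne] hr; apply/andP; split.
        have := in_diag_pos h => -[? ?]; apply: part_dc h _ _ _ _ => //; lia.
      apply/negP => /eqP [e1 e2]; subst r' c'; by rewrite h in h2.
  + by move=> r' c' /andP[h _]; apply: bnd_diag.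
Qed.

Lemma addableP lam x : is_partition lam -> addable lam x <-> addb lam x.
Proof.
move=> hp; case: x => r c; split.
- case=> hx /dc_of_young [hdc hpos].
  have [hr hc] : 0 < r /\ 0 < c by apply: hpos; rewrite /= eqxx orbT.
  rewrite /addb /= hr hc hx /=.
  apply/andP; split.
  + case: (r =P 1) => //= hr1.
    have := hdc r c r.-1 c; rewrite eqxx orbT => /(_ isT).
    have -> : (r.-1, c) == (r, c) = false by rewrite xpair_eqE; apply/negP => /andP[/eqP]; lia.
    rewrite orbF; apply; lia.
  + case: (c =P 1) => //= hc1.
    have := hdc r c r c.-1; rewrite eqxx orbT => /(_ isT).
    have -> : (r, c.-1) == (r, c) = false by rewrite xpair_eqE; apply/negP => /andP[_ /eqP]; lia.
    rewrite orbF; apply; lia.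
- case/and5P=> /= hr hc hx h1 h2; split => //.
  apply: (@young_of _ (bl lam).+1).
  + move=> r' c' /orP[h|/eqP[-> ->]] //; exact: in_diag_pos h.
  + apply: local_dc.
    * move=> r' c' /orP[h|/eqP[-> ->]] //; exact: in_diag_pos h.
    * move=> r' c' /orP[h|/eqP[e1 e2]] hr'; apply/orP; left.
        have := in_diag_pos h => -[? ?]; apply: part_dc h _ _ _ _ => //; lia.
      subst r c'; move: h1; rewrite /= => /orP[/eqP|] //; lia.
    * move=> r' c' /orP[h|/eqP[e1 e2]] hc'; apply/orP; left.
        have := in_diag_pos h => -[? ?]; apply: part_dc h _ _ _ _ => //; lia.
      subst r' c; move: h2; rewrite /= => /orP[/eqP|] //; lia.
  + move=> r' c' /orP[h|/eqP[e1 e2]]; first by have := bnd_diag hp h; lia.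
    subst r' c'; split.
      case/orP: h1 => [/eqP -> //|h]; have := bnd_diag hp h; lia.
    case/orP: h2 => [/eqP -> //|h]; have := bnd_diag hp h; lia.
Qed.

Section Cong.
Local Open Scope ring_scope.

Lemma cong_sub l a b i : cong_mod l a i -> cong_mod l b i -> (l%:Z %| a - b)%Z.
Proof.
rewrite /cong_mod => h1 h2; have := rpredB h1 h2.
by have -> : a - i%:Z - (b - i%:Z) = a - b by lia.
Qed.

Lemma dvd_small (l : nat) (x : int) : (l%:Z %| x)%Z -> (`|x| < l)%N -> x = 0.
Proof.
rewrite dvdzE absz_nat => hd hx.
case: (posnP `|x|%N) => [/eqP|hp]; first by rewrite absz_eq0 => /eqP.
have := dvdn_leq hp hd; lia.
Qed.

Lemma cong_adj l a i : (1 < l)%N -> cong_mod l a i -> cong_mod l (a + 1) i -> False.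
Proof.
move=> hl h1 h2; have := cong_sub h1 h2.
have -> : a - (a + 1) = -1 by lia.
move/dvd_small => /(_ _); rewrite abszN1 => /(_ hl); lia.
Qed.

Lemma cong_uniq l a i j : (i < l)%N -> (j < l)%N -> cong_mod l a i -> cong_mod l a j -> i = j.
Proof.
rewrite /cong_mod => hi hj h1 h2; have := rpredB h2 h1.
have -> : a - j%:Z - (a - i%:Z) = i%:Z - j%:Z by lia.
move/dvd_small => h; have : i%:Z - j%:Z = 0 by apply: h; lia.
lia.
Qed.

Lemma cong_shift l a i d : cong_mod l a i -> (l%:Z %| d)%Z -> cong_mod l (a + d) i.
Proof.
rewrite /cong_mod => h1 h2; have := rpredD h1 h2.
by have -> : a - i%:Z + d = a + d - i%:Z by lia.
Qed.

Lemma cong_shiftE l a i d : (l%:Z %| d)%Z -> cong_mod l (a + d) i = cong_mod l a i.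
Proof.
move=> hd; apply/idP/idP => h; last exact: cong_shift.
have hd' : (l%:Z %| - d)%Z by rewrite rpredN.
have := cong_shift h hd'; by have -> : a + d + - d = a by lia.
Qed.

Lemma cong_modn l a i : cong_mod l a (i %% l) = cong_mod l a i.
Proof.
rewrite /cong_mod.
have -> : a - (i %% l)%N%:Z = a - i%:Z + (l * (i %/ l))%N%:Z.
  have := divn_eq i l; lia.
apply: rpredDr; rewrite PoszM; exact: dvdz_mulr (dvdzz l%:Z).
Qed.

End Cong.

Lemma contentS1 r c : content (r.+1, c) = (content (r, c) - 1)%R.
Proof. rewrite /content /=; lia. Qed.
Lemma contentS2 r c : content (r, c.+1) = (content (r, c) + 1)%R.
Proof. rewrite /content /=; lia. Qed.

Definition cgi l i (x : cell) := cong_mod l (content x) i.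
Definition Qp l i lam (x : cell) :=
  (in_diag lam x && ~~ (remb lam x && cgi l i x)) || (addb lam x && cgi l i x).

Lemma addb_pos lam x : addb lam x -> 0 < x.1 /\ 0 < x.2.
Proof. by case/and5P. Qed.

Lemma addb_bnd lam r c : is_partition lam -> addb lam (r,c) -> r <= (bl lam).+1 /\ c <= (bl lam).+1.
Proof.
move=> hp /and5P[/= _ _ _ h1 h2]; split.
  case/orP: h1 => [/eqP -> //|h]; have := bnd_diag hp h; lia.
case/orP: h2 => [/eqP -> //|h]; have := bnd_diag hp h; lia.
Qed.

Lemma Q_young l i lam : (1 < l)%N -> is_partition lam -> young (Qp l i lam).
Proof.
move=> hl hp.
have hpos : posc (Qp l i lam).
  move=> r c /orP[/andP[h _]|/andP[h _]]; [exact: in_diag_pos h|exact: addb_pos h].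
apply: (@young_of _ (bl lam).+1) => //.
- apply: local_dc => //.
  + move=> r c /orP[/andP[h hn]|/andP[h hc]] hr; apply/orP; left.
    * have := in_diag_pos h => -[? ?].
      have hrc : in_diag lam (r,c) by apply: part_dc h _ _ _ _ => //; lia.
      by rewrite hrc /remb /= h /= andbF.
    * move: h => /and5P[/= _ hc0 _ h1 _]; move: h1; rewrite /= -[r.+1 == 1]/(r == 0).
      have -> : (r == 0) = false by lia.
      move=> /= h1; rewrite h1 /=; apply/negP => /andP[_ hc'].
      move: hc; rewrite /cgi contentS1 => hc.
      have e : (content (r,c) - 1 + 1 = content (r,c))%R by lia.
      by apply: (cong_adj hl hc); rewrite e.
  + move=> r c /orP[/andP[h hn]|/andP[h hc]] hr; apply/orP; left.
    * have := in_diag_pos h => -[? ?].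
      have hrc : in_diag lam (r,c) by apply: part_dc h _ _ _ _ => //; lia.
      by rewrite hrc /remb /= h /= !andbF.
    * move: h => /and5P[/= _ _ _ _ h1]; move: h1; rewrite /= -[c.+1 == 1]/(c == 0).
      have -> : (c == 0) = false by lia.
      move=> /= h1; rewrite h1 /=; apply/negP => /andP[_ hc'].
      move: hc; rewrite /cgi contentS2 => hc.
      exact: (cong_adj hl hc' hc).
- move=> r c /orP[/andP[h _]|/andP[h _]]; first by have := bnd_diag hp h; lia.
  exact: addb_bnd.
Qed.

Lemma T_exists l i lam : (1 < l)%N -> is_partition lam -> exists nu, T_spec l i lam nu.
Proof.
move=> hl hp; have [nu [hnu hQ]] := Q_young i hl hp.
exists nu; split => // x; rewrite -hQ /Qp removableP // addableP // /cgi.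
case: (in_diag lam x); case: (remb lam x); case: (addb lam x); case: (cong_mod l (content x) i);
  rewrite /=; intuition.
Qed.

Lemma T_specE l i lam nu : is_partition lam -> T_spec l i lam nu -> forall x, in_diag nu x = Qp l i lam x.
Proof.
move=> hp [hnu H] x; apply/idP/idP.
- move/H; rewrite removableP // addableP // /Qp /cgi.
  case: (in_diag lam x); case: (remb lam x); case: (addb lam x); case: (cong_mod l (content x) i);
  rewrite /=; intuition.
- move=> hq; apply/H; move: hq; rewrite removableP // addableP // /Qp /cgi.
  case: (in_diag lam x); case: (remb lam x); case: (addb lam x); case: (cong_mod l (content x) i);
  rewrite /=; intuition.
Qed.

Lemma cells_mem lam x : (x \in cells lam) = in_diag lam x.
Proof.
case: x => r c; rewrite /cells /in_diag /=.
apply/allpairsPdep/idP.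
- case=> r' [c' [hr hc [-> ->]]]; move: hr hc; rewrite !mem_iota; lia.
- move=> /andP[h1 h2]; exists r, c; split => //; rewrite mem_iota; lia.
Qed.

Lemma cells_uniq lam : uniq (cells lam).
Proof.
apply: allpairs_uniq_dep; first exact: iota_uniq.
- by move=> r _; exact: iota_uniq.
- by case=> [x1 y1] [x2 y2] _ _ /= [-> ->].
Qed.

Definition box B : seq cell := [seq (r, c) | r <- iota 0 B, c <- iota 0 B].

Lemma count_box (a : pred cell) s t :
  count a [seq (r, c) | r <- s, c <- t] = (\sum_(r <- s) \sum_(c <- t) a (r,c))%N.
Proof.
elim: s => [|r s IH]; first by rewrite big_nil.
rewrite allpairs_cons count_cat IH big_cons; congr (_ + _)%N.
clear IH; elim: t => [|c t IHt]; first by rewrite big_nil.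
by rewrite /= big_cons IHt.
Qed.

Lemma count_cells lam (P : pred cell) B :
  (forall r c, in_diag lam (r,c) -> r < B /\ c < B) ->
  count P (cells lam) = (\sum_(0 <= r < B) \sum_(0 <= c < B) (in_diag lam (r,c) && P (r,c)))%N.
Proof.
move=> hb.
have hperm : perm_eq (cells lam) (filter (in_diag lam) (box B)).
  apply: uniq_perm; [exact: cells_uniq| |].
  - apply: filter_uniq; apply: allpairs_uniq; try exact: iota_uniq.
    by case=> [x1 y1] [x2 y2] _ _ /= [-> ->].
  - case=> r c; rewrite mem_filter cells_mem.
    case h: (in_diag lam (r,c)) => //=; symmetry; apply/allpairsP.
    have := hb _ _ h => -[h1 h2]; exists (r,c); split => //=; rewrite mem_iota; lia.
rewrite ((permP hperm) P) count_filter /box count_box.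
rewrite /index_iota !subn0; apply: eq_bigr => r _; apply: eq_bigr => c _.
by rewrite /= andbC.
Qed.

Section Sums.
Local Open Scope ring_scope.

Definition ind (b : bool) : int := (b : nat)%:Z.

Lemma Posz_sum (s : seq nat) (F : nat -> nat) :
  ((\sum_(i <- s) F i)%N)%:Z = \sum_(i <- s) (F i)%:Z.
Proof. elim: s => [|x s IH]; rewrite ?big_nil // !big_cons PoszD IH //. Qed.

Variable B : nat.
Definition S2 (F : nat -> nat -> int) := \sum_(0 <= r < B) \sum_(0 <= c < B) F r c.

Lemma S2_ext F G : (forall r c, F r c = G r c) -> S2 F = S2 G.
Proof. by move=> h; apply: eq_bigr => r _; apply: eq_bigr => c _. Qed.

Lemma S2D F G : S2 (fun r c => F r c + G r c) = S2 F + S2 G.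
Proof. rewrite /S2 -big_split; apply: eq_bigr => r _; exact: big_split. Qed.

Lemma S2N F : S2 (fun r c => - F r c) = - S2 F.
Proof. rewrite /S2 -sumrN; apply: eq_bigr => r _; exact: sumrN. Qed.

Lemma S2B F G : S2 (fun r c => F r c - G r c) = S2 F - S2 G.
Proof. by rewrite S2D S2N. Qed.

Lemma shift1 (H : nat -> int) : H 0%N = 0 -> H B = 0 ->
  \sum_(0 <= r < B) H r = \sum_(0 <= r < B) H r.+1.
Proof.
move=> h0 hB.
have : \sum_(0 <= i < B.+1) H i = \sum_(0 <= i < B.+1) H i by [].
rewrite {1}big_nat_recr // big_nat_recl // hB h0 add0r.
by rewrite [in X in X = _ -> _]/= addr0.
Qed.

Lemma S2_shift1 F : (forall c, F 0%N c = 0) -> (forall c, F B c = 0) ->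
  S2 F = S2 (fun r c => F r.+1 c).
Proof.
move=> h0 hB; rewrite /S2 shift1 //.
- by rewrite big1 // => c _.
- by rewrite big1 // => c _.
Qed.

Lemma S2_shift2 F : (forall r, F r 0%N = 0) -> (forall r, F r B = 0) ->
  S2 F = S2 (fun r c => F r c.+1).
Proof. by move=> h0 hB; apply: eq_bigr => r _; rewrite shift1. Qed.

End Sums.

Lemma Ncount_S2 l k lam B :
  (forall r c, in_diag lam (r,c) -> r < B /\ c < B) ->
  Ncount l k lam = S2 B (fun r c => (ind (cgi l k (r,c)) * ind (in_diag lam (r,c)))%R).
Proof.
move=> hb; rewrite /Ncount (count_cells _ hb) /S2 Posz_sum.
apply: eq_bigr => r _; rewrite Posz_sum; apply: eq_bigr => c _.
rewrite /ind /cgi; case: (in_diag _ _); case: (cong_mod _ _ _) => //.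
Qed.

Lemma in_diag0l lam c : in_diag lam (0,c) = false.
Proof. by []. Qed.
Lemma in_diag0r lam r : in_diag lam (r,0) = false.
Proof. by rewrite /in_diag /= andbF. Qed.

Section Count.
Local Open Scope ring_scope.

Lemma cong_pred l a i : cong_mod l (a - 1) i = cong_mod l a i.+1.
Proof. by rewrite /cong_mod; have -> : a - 1 - i%:Z = a - (i.+1)%:Z by lia. Qed.

Lemma cong_succ l a i : (0 < l)%N -> cong_mod l (a + 1) i = cong_mod l a (i + l).-1.
Proof.
move=> hl; rewrite /cong_mod.
have -> : a - ((i + l).-1)%:Z = (a + 1 - i%:Z) + - l%:Z by lia.
have hd : (l%:Z %| - l%:Z)%Z by rewrite rpredN dvdzz.
by rewrite (rpredDr _ hd).
Qed.

Lemma pointwise_d lam r c : is_partition lam ->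
  ind (in_diag lam (r.-1,c)) + ind (in_diag lam (r,c.-1)) - ind (in_diag lam (r,c))
  - ind (in_diag lam (r.-1,c.-1))
  = ind (addb lam (r,c)) - ind (remb lam (r.-1,c.-1)) - ind ((r == 1)%N && (c == 1)%N).
Proof.
move=> hp; have dcf := part_dc hp.
case: r => [|[|r]]; case: c => [|[|c]];
  rewrite /addb /remb /= ?in_diag0l ?in_diag0r /= ?andbF //.
- by case: (in_diag lam (1,1)).
- have h : in_diag lam (1, c.+2) -> in_diag lam (1, c.+1) by move=> h; apply: dcf h _ _ _ _.
  by move: h; case: (in_diag lam (1, c.+2)); case: (in_diag lam (1, c.+1)) => // /(_ isT).
- have h : in_diag lam (r.+2, 1) -> in_diag lam (r.+1, 1) by move=> h; apply: dcf h _ _ _ _.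
  by move: h; case: (in_diag lam (r.+2, 1)); case: (in_diag lam (r.+1, 1)) => // /(_ isT).
- have h1 : in_diag lam (r.+2, c.+2) -> in_diag lam (r.+1, c.+2) by move=> h; apply: dcf h _ _ _ _.
  have h2 : in_diag lam (r.+2, c.+2) -> in_diag lam (r.+2, c.+1) by move=> h; apply: dcf h _ _ _ _.
  have h3 : in_diag lam (r.+1, c.+2) -> in_diag lam (r.+1, c.+1) by move=> h; apply: dcf h _ _ _ _.
  have h4 : in_diag lam (r.+2, c.+1) -> in_diag lam (r.+1, c.+1) by move=> h; apply: dcf h _ _ _ _.
  move: h1 h2 h3 h4.
  case: (in_diag lam (r.+2, c.+2)); case: (in_diag lam (r.+1, c.+2));
  case: (in_diag lam (r.+2, c.+1)); case: (in_diag lam (r.+1, c.+1)); rewrite /ind /=;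
  move=> h1 h2 h3 h4; (try by []); (try by move: (h1 isT)); (try by move: (h2 isT));
  (try by move: (h3 isT)); (try by move: (h4 isT)).
Qed.

Lemma sum_ind1 (B : nat) (f : nat -> int) : (1 < B)%N ->
  \sum_(0 <= r < B) ind (r == 1)%N * f r = f 1%N.
Proof.
move=> hB; rewrite big_ltn; last lia.
rewrite big_ltn //= big_nat_cond big1; first by rewrite mul0r add0r mul1r addr0.
move=> r /andP[/andP[h1 h2] _]; have -> : (r == 1)%N = false by lia.
by rewrite mul0r.
Qed.

Lemma S2_11 (B : nat) (K : int) : (1 < B)%N ->
  S2 B (fun r c => ind ((r == 1)%N && (c == 1)%N) * K) = K.
Proof.
move=> hB; rewrite /S2.
rewrite (eq_bigr (fun r => ind (r == 1)%N * \sum_(0 <= c < B) ind (c == 1)%N * K)).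
  by rewrite sum_ind1 // sum_ind1.
move=> r _; case: (r == 1)%N; rewrite /ind /= ?mul1r ?mul0r //.
by rewrite big1 // => c _; rewrite mul0r.
Qed.

Lemma cong0 l i : (i < l)%N -> cong_mod l 0 i = (i == 0)%N.
Proof.
move=> hi; rewrite /cong_mod; apply/idP/idP.
- move/dvd_small => h; have : 0 - i%:Z = 0 by apply: h; lia.
  lia.
- by move/eqP => ->; rewrite subr0 dvdz0.
Qed.

Theorem equivariance l i mu nu : (1 < l)%N -> is_partition mu -> (i < l)%N -> T_spec l i mu nu ->
  forall j, (j < l)%N -> dvec l nu j = sigma_act l i (dvec l mu) j.
Proof.
move=> hl hp hi hT j hj.
have hQ := T_specE hp hT.
set B := (bl mu + 3)%N.
have bmu : forall r c, in_diag mu (r,c) -> (r < B)%N /\ (c < B)%N.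
  by move=> r c h; have := bnd_diag hp h; rewrite /B; lia.
have bnu : forall r c, in_diag nu (r,c) -> (r < B)%N /\ (c < B)%N.
  move=> r c; rewrite hQ /Qp => /orP[/andP[h _]|/andP[h _]].
    by have := bnd_diag hp h; rewrite /B; lia.
  by have := addb_bnd hp h; rewrite /B; lia.
have out : forall r c, (B.-1 <= r)%N || (B.-1 <= c)%N -> in_diag mu (r,c) = false.
  move=> r c h; apply/negP => h'; have := bnd_diag hp h'; rewrite /B in h; lia.
set X := fun r c => ind (in_diag mu (r,c)).
have N_S2 : forall k, dvec l mu k = S2 B (fun r c => ind (cgi l k (r,c)) * X r c).
  by move=> k; rewrite /dvec (Ncount_S2 _ _ bmu).
have Qpt : forall x, ind (Qp l i mu x) = ind (in_diag mu x) + ind (cgi l i x) * (ind (addb mu x) - ind (remb mu x)).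
  move=> x; rewrite /Qp.
  have hr : remb mu x -> in_diag mu x by case/and3P.
  have ha : addb mu x -> ~~ in_diag mu x by case/and5P.
  move: hr ha; case: (in_diag mu x); case: (remb mu x); case: (addb mu x); case: (cgi l i x);
    rewrite /ind //= => h1 h2; (try by move: (h1 isT)); (try by move: (h2 isT)).
rewrite /dvec (Ncount_S2 _ _ bnu).
under S2_ext => r c do rewrite hQ Qpt mulrDr.
rewrite S2D -/X -N_S2 /sigma_act.
case: (eqVneq j i) => [ej|nji]; last first.
  have z : S2 B (fun _ _ => 0) = 0 by rewrite /S2 big1 // => r _; rewrite big1.
  rewrite (@S2_ext B _ (fun _ _ => 0)); first by rewrite z addr0.
  move=> r c; rewrite /ind /cgi.
  case hcj: (cong_mod l (content (r,c)) j); case hci: (cong_mod l (content (r,c)) i); rewrite /= ?mul0r //.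
  by have := cong_uniq hj hi hcj hci => e; rewrite e eqxx in nji.
subst j.
have cgsq : forall r c, ind (cgi l i (r,c)) * (ind (cgi l i (r,c)) * (ind (addb mu (r,c)) - ind (remb mu (r,c))))
   = ind (cgi l i (r,c)) * ind (addb mu (r,c)) - ind (cgi l i (r,c)) * ind (remb mu (r,c)).
  by move=> r c; case: (cgi l i (r,c)); rewrite /ind /= ?mul1r ?mul0r ?subr0.
rewrite (@S2_ext B _ _ cgsq) S2B.
have hadd : S2 B (fun r c => ind (cgi l i (r,c)) * ind (addb mu (r,c))) =
  S2 B (fun r c => ind (cgi l i (r,c)) * X r.-1 c) + S2 B (fun r c => ind (cgi l i (r,c)) * X r c.-1)
  - S2 B (fun r c => ind (cgi l i (r,c)) * X r c) - S2 B (fun r c => ind (cgi l i (r,c)) * X r.-1 c.-1)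
  + S2 B (fun r c => ind (cgi l i (r,c)) * ind (remb mu (r.-1,c.-1)))
  + S2 B (fun r c => ind ((r == 1)%N && (c == 1)%N) * ind (cgi l i (1%N,1%N))).
  rewrite (@S2_ext B _ (fun r c => ind (cgi l i (r,c)) * X r.-1 c + ind (cgi l i (r,c)) * X r c.-1
     - ind (cgi l i (r,c)) * X r c - ind (cgi l i (r,c)) * X r.-1 c.-1
     + ind (cgi l i (r,c)) * ind (remb mu (r.-1,c.-1))
     + ind ((r == 1)%N && (c == 1)%N) * ind (cgi l i (1%N,1%N)))).
    by rewrite S2D S2D S2B S2B S2D.
  move=> r c.
  have := pointwise_d r c hp; rewrite -/X.
  case e11: ((r == 1)%N && (c == 1)%N).
    move/andP: e11 => [/eqP er /eqP ec]; subst r c; rewrite /= => h.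
    move: h; rewrite /X; case: (cgi l i (1%N,1%N)); rewrite /ind /= => h; lia.
  move=> h; move: h; rewrite /X; case: (cgi l i (r,c)); rewrite /ind /= => h; lia.
have X0l : forall c, X 0%N c = 0 by move=> c; rewrite /X in_diag0l.
have X0r : forall r, X r 0%N = 0 by move=> r; rewrite /X in_diag0r.
have XB1 : forall c, X B.-1 c = 0 by move=> c; rewrite /X out // leqnn.
have XB2 : forall r, X r B.-1 = 0 by move=> r; rewrite /X out // leqnn orbT.
have ha : S2 B (fun r c => ind (cgi l i (r,c)) * X r.-1 c) = dvec l mu (i.+1 %% l).
  rewrite N_S2 S2_shift1 /=; first apply: S2_ext => r c.
  - by rewrite /cgi contentS1 cong_pred cong_modn.
  - by move=> c; rewrite X0l mulr0.
  - by move=> c; rewrite XB1 mulr0.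
have hb : S2 B (fun r c => ind (cgi l i (r,c)) * X r c.-1) = dvec l mu ((i + l).-1 %% l).
  rewrite N_S2 S2_shift2 /=; first apply: S2_ext => r c.
  - by rewrite /cgi contentS2 cong_succ ?cong_modn //; lia.
  - by move=> r; rewrite X0r mulr0.
  - by move=> r; rewrite XB2 mulr0.
have hc : S2 B (fun r c => ind (cgi l i (r,c)) * X r.-1 c.-1) = dvec l mu i.
  rewrite N_S2 S2_shift1 /=; first rewrite S2_shift2 /=; first apply: S2_ext => r c.
  - by rewrite /cgi contentS1 contentS2; congr (ind (cong_mod _ _ _) * _); lia.
  - by move=> r; rewrite X0r mulr0.
  - by move=> r; rewrite XB2 mulr0.
  - by move=> c; rewrite X0l mulr0.
  - by move=> c; rewrite XB1 mulr0.
have R0l : forall c, remb mu (0%N, c) = false by [].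
have R0r : forall r, remb mu (r, 0%N) = false by move=> r; rewrite /remb in_diag0r.
have RB1 : forall c, remb mu (B.-1, c) = false by move=> c; rewrite /remb out // leqnn.
have RB2 : forall r, remb mu (r, B.-1) = false by move=> r; rewrite /remb out // leqnn orbT.
have he : S2 B (fun r c => ind (cgi l i (r,c)) * ind (remb mu (r.-1,c.-1))) =
          S2 B (fun r c => ind (cgi l i (r,c)) * ind (remb mu (r,c))).
  rewrite S2_shift1 /=; first rewrite S2_shift2 /=; first apply: S2_ext => r c.
  - by rewrite /cgi contentS1 contentS2; congr (ind (cong_mod _ _ _) * _); lia.
  - by move=> r; rewrite R0r mulr0.
  - by move=> r; rewrite RB2 mulr0.
  - by move=> c; rewrite R0l mulr0.
  - by move=> c; rewrite RB1 mulr0.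
have hf : S2 B (fun r c => ind ((r == 1)%N && (c == 1)%N) * ind (cgi l i (1%N,1%N))) = ind (i == 0)%N.
  by rewrite S2_11 ?/B //; [rewrite /cgi /content /= subrr cong0|lia].
rewrite hadd ha hb hc he hf -N_S2 /dvec.
case: (i == 0)%N; rewrite /ind /=; lia.
Qed.

End Count.

Definition Vp (P : cell -> bool) (k : int) :=
  exists r c, (0 < r)%N /\ (c = 0%N \/ P (r,c)) /\ ~~ P (r, c.+1) /\ content (r,c) = k.
Definition Hp (P : cell -> bool) (k : int) :=
  exists r c, (0 < c)%N /\ (r = 0%N \/ P (r,c)) /\ ~~ P (r.+1, c) /\ (content (r,c) - 1)%R = k.

Lemma VH_excl P k : dc P -> Vp P k -> Hp P k -> False.
Proof.
move=> hdc [r1 [c1 [h1 [h2 [h3 h4]]]]] [r2 [c2 [g1 [g2 [g3 g4]]]]].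
have e : (c1%:Z - r1%:Z = c2%:Z - r2%:Z - 1)%R by move: h4 g4; rewrite /content /=; lia.
case: (leqP r2.+1 r1) => hr.
- case: h2 => [hc1|hP]; first by lia.
  suff : P (r2.+1, c2) by rewrite (negbTE g3).
  apply: hdc hP _ _ _ _; lia.
- case: g2 => [hr2|hP]; first by lia.
  suff : P (r1, c1.+1) by rewrite (negbTE h3).
  apply: hdc hP _ _ _ _; lia.
Qed.

Definition tau l i (k : int) : int :=
  if cong_mod l k i then (k - 1)%R else if cong_mod l (k + 1) i then (k + 1)%R else k.

Lemma tau_shift l i k : tau l i (k - l%:Z)%R = (tau l i k - l%:Z)%R.
Proof.
have hd : (l%:Z %| (- l%:Z)%R)%Z by rewrite rpredN dvdzz.
rewrite /tau -[(k - l%:Z)%R]/(k + (- l%:Z))%R (@cong_shiftE l k i _ hd).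
have -> : (k + (- l%:Z) + 1 = (k + 1) + - l%:Z)%R by lia.
rewrite (@cong_shiftE l (k + 1)%R i _ hd).
case: (cong_mod l k i); last case: (cong_mod l (k+1) i); lia.
Qed.

Section TRel.
Variables (l i : nat) (nu : seq nat) (Q : cell -> bool).
Hypothesis hl : (1 < l)%N.
Hypothesis hp : is_partition nu.
Hypothesis hQ : forall x, Q x = Qp l i nu x.
Local Notation P := (in_diag nu).

Lemma Q_nocg x : ~~ cgi l i x -> Q x = P x.
Proof. by move=> h; rewrite hQ /Qp (negbTE h) !andbF /= andbT orbF. Qed.

Lemma dcP r c r' c' : P (r,c) -> (0 < r')%N -> (r' <= r)%N -> (0 < c')%N -> (c' <= c)%N -> P (r',c').
Proof. exact: part_dc. Qed.

Lemma cg_adj1 r c : cgi l i (r,c) -> ~~ cgi l i (r, c.+1).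
Proof. by rewrite /cgi contentS2 => h; apply/negP => h'; apply: (cong_adj hl h h'). Qed.
Lemma cg_adj2 r c : cgi l i (r.+1,c) -> ~~ cgi l i (r, c).
Proof.
rewrite /cgi contentS1 => h; apply/negP => h'; apply: (cong_adj hl h).
by have -> : (content (r, c) - 1 + 1 = content (r,c))%R by lia.
Qed.

Lemma V_T k : Vp Q k -> Vp P (tau l i k).
Proof.
case=> r [c [hr [hA [hB hk]]]].
rewrite /tau -hk.
case hcg: (cong_mod l (content (r,c)) i).
- have hB' : ~~ P (r, c.+1) by rewrite -Q_nocg // cg_adj1.
  case: hA => [hc0|hQA].
  + subst c; exists r.+1, 0%N; split => //; split; first by left.
    split; last by rewrite /content /=; lia.
    apply/negP => h; move/negP: hB'; apply; apply: dcP h _ _ _ _; lia.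
  + move: hQA; rewrite hQ /Qp /cgi hcg andbT /=.
    case hPA: (P (r,c)) => /=.
    * have -> : addb nu (r,c) = false by rewrite /addb hPA /= !andbF.
      rewrite orbF /remb hPA hB' /= andbT negbK => h1.
      exists r.+1, c; split => //; split; first by right.
      split; last by rewrite contentS1.
      apply/negP => h; move/negP: hB'; apply; apply: dcP h _ _ _ _; lia.
    * move=> /andP[/and5P[/= _ hc0 _ _ h5] _].
      exists r, c.-1; split => //; split.
        case/orP: h5 => [/eqP ->|h]; [by left|by right].
      rewrite prednK //; split; first by rewrite hPA.
      rewrite /content /=; lia.
- case hcg1: (cong_mod l (content (r,c) + 1) i).
  + have hA' : c = 0%N \/ P (r,c) by case: hA => [->|h]; [left|right; rewrite -Q_nocg // /cgi hcg].
    move: hB; rewrite hQ /Qp /cgi contentS2 hcg1 andbT.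
    case hPB: (P (r,c.+1)) => /=.
    * rewrite negb_or negbK => /andP[h _]; move: h.
      rewrite /remb hPB /= => /andP[_ h2].
      exists r, c.+1; split => //; split; first by right.
      by split => //; rewrite contentS2.
    * rewrite /addb /= hPB /= hr /= => h.
      have h5 : (c.+1 == 1%N) || P (r, c) by case: hA' => [->|->]; rewrite ?orbT.
      move: h; rewrite h5 !andbT negb_or => /andP[hr1 hPr].
      exists r.-1, c; split; first lia.
      split.
        case: hA' => [->|h]; [by left|right].
        have := in_diag_pos h => -[? ?].
        apply: dcP h _ _ _ _ => //; lia.
      split; first by [].
      rewrite /content /=; lia.
  + exists r, c; split => //; split.
      by case: hA => [->|h]; [left|right; rewrite -Q_nocg // /cgi hcg].
    split; last by [].
    by rewrite -Q_nocg // /cgi contentS2 hcg1.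
Qed.

Lemma H_T k : Hp Q k -> Hp P (tau l i k).
Proof.
case=> r [c [hc [hB [hA hk]]]].
rewrite /tau -hk.
have e1 : (content (r,c) - 1)%R = content (r.+1, c) by rewrite contentS1.
case hcg: (cong_mod l (content (r,c) - 1) i).
- have hcgA : cgi l i (r.+1,c) by rewrite /cgi -e1.
  have hB' : r = 0%N \/ P (r,c).
    case: hB => [->|h]; [by left|right; rewrite -Q_nocg //; exact: cg_adj2].
  move: hA; rewrite hQ /Qp hcgA andbT.
  case hPA: (P (r.+1,c)) => /=.
  + have -> : addb nu (r.+1,c) = false by rewrite /addb hPA /= !andbF.
    rewrite !andbT orbF negbK /remb hPA /= => /andP[h1 h2].
    exists r.+1, c; split => //; split; first by right.
    by split => //; rewrite -e1.
  + rewrite /addb /= hPA /= hc /=.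
    have -> : (r.+1 == 1%N) || P (r, c) by case: hB' => [->|->]; rewrite ?orbT.
    rewrite !andbT negb_or => /andP[hc1 hPc].
    exists r, c.-1; split; first lia.
    split.
      case: hB' => [->|h]; [by left|right].
      have := in_diag_pos h => -[? ?].
      apply: dcP h _ _ _ _ => //; lia.
    split; first by [].
    rewrite /content /=; lia.
- have hA' : ~~ P (r.+1, c) by rewrite -Q_nocg // /cgi -e1 hcg.
  have e2 : (content (r,c) - 1 + 1 = content (r,c))%R by lia.
  rewrite e2.
  case hcg1: (cong_mod l (content (r,c)) i).
  + case: hB => [hr0|hQB].
    * subst r; exists 0%N, c.+1; split => //; split; first by left.
      split; last by rewrite /content /=; lia.
      apply/negP => h; have := dcP h (ltn0Sn _) (leqnn _) hc (leqnSn _); by rewrite (negbTE hA').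
    * move: hQB; rewrite hQ /Qp /cgi hcg1 andbT /=.
      case hPB: (P (r,c)) => /=.
      - have -> : addb nu (r,c) = false by rewrite /addb hPB /= !andbF.
        rewrite !andbT orbF /remb hPB hA' /= negbK => h.
        exists r, c.+1; split => //; split; first by right.
        split; last by rewrite contentS2; lia.
        apply/negP => h'; have := dcP h' (ltn0Sn _) (leqnn _) hc (leqnSn _); by rewrite (negbTE hA').
      - move=> /andP[/and5P[/= hr0 _ _ h4 _] _].
        exists r.-1, c; split => //; split.
          case/orP: h4 => [/eqP ->|h]; [by left|by right].
        rewrite prednK //; split; first by rewrite hPB.
        rewrite /content /=; lia.
  + exists r, c; split => //; split.
      by case: hB => [->|h]; [left|right; rewrite -Q_nocg // /cgi hcg1].
    by split => //; lia.
Qed.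

End TRel.

Lemma adj_content x y : adj_cell x y -> content y = (content x + 1)%R \/ content y = (content x - 1)%R.
Proof. case: x y => [x1 x2] [y1 y2]; rewrite /adj_cell /content /= => h; lia. Qed.

Lemma adj_sym : symmetric adj_cell.
Proof. case=> [x1 x2] [y1 y2]; rewrite /adj_cell /=; apply/idP/idP => h; lia. Qed.

Lemma path_ivt x p t : path adj_cell x p ->
  (content x <= t)%R -> (t <= content (last x p))%R -> exists2 z, z \in x :: p & content z = t.
Proof.
elim: p x => [|y p IH] x /=.
  move=> _ h1 h2; exists x; rewrite ?inE ?eqxx //; lia.
move=> /andP[hxy hp] h1 h2.
case: (eqVneq t (content x)) => [->|ne]; first by exists x; rewrite ?inE ?eqxx.
have [z hz ez] : exists2 z, z \in y :: p & content z = t.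
  apply: IH => //; case: (adj_content hxy) => ->; lia.
by exists z => //; rewrite inE hz orbT.
Qed.

Lemma seq_argmax (T : eqType) (f : T -> int) (s : seq T) : s != [::] ->
  exists2 x, x \in s & forall y, y \in s -> (f y <= f x)%R.
Proof.
elim: s => [|x s IH] // _.
case: (eqVneq s [::]) => [->|ne].
  by exists x; rewrite ?inE // => y; rewrite inE => /eqP ->.
have [m hm hmax] := IH ne.
case: (lerP (f m) (f x)) => h.
- exists x; first by rewrite inE eqxx.
  move=> y; rewrite inE => /orP[/eqP ->//|hy]; have := hmax _ hy; lia.
- exists m; first by rewrite inE hm orbT.
  move=> y; rewrite inE => /orP[/eqP ->|hy]; [lia|exact: hmax].
Qed.

Lemma seq_argmin (T : eqType) (f : T -> int) (s : seq T) : s != [::] ->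
  exists2 x, x \in s & forall y, y \in s -> (f x <= f y)%R.
Proof.
move=> hne; have [x hx h] := seq_argmax (fun y => - f y)%R hne.
exists x => // y hy; have := h y hy; lia.
Qed.

Definition intrange (a : int) n := [seq (a + k%:Z)%R | k <- iota 0 n].

Lemma intrange_mem a n t : (t \in intrange a n) = (a <= t)%R && (t < a + n%:Z)%R.
Proof.
apply/mapP/idP.
- case=> k; rewrite mem_iota => hk ->; lia.
- move=> h; exists `|(t - a)%R|%N; first by rewrite mem_iota; lia.
  lia.
Qed.

Lemma intrange_uniq a n : uniq (intrange a n).
Proof.
rewrite map_inj_uniq ?iota_uniq // => k1 k2 e; lia.
Qed.

Lemma hook_VH lam H : is_partition lam -> rim_hook lam H ->
  exists b, Vp (in_diag lam) b /\ Hp (in_diag lam) (b - (size H)%:Z)%R.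
Proof.
move=> hpart [hu [hne [hall [hy [hconn hno]]]]].
have [hdcM _] := dc_of_young hy.
have hPH : forall x, x \in H -> in_diag lam x by move=> x hx; exact: (allP hall) x hx.
have skew : forall x z, x \in H -> in_diag lam z -> (x.1 <= z.1)%N -> (x.2 <= z.2)%N -> z \in H.
  move=> [x1 x2] [z1 z2] hx hz /= h1 h2; apply/negPn/negP => hzn.
  have [p1 p2] := in_diag_pos (hPH _ hx).
  have := hdcM z1 z2 x1 x2; rewrite /= hz hzn /= => /(_ isT p1 h1 p2 h2).
  by rewrite hx andbF.
have dist : {in H &, injective content}.
  move=> [p1 p2] [q1 q2] hp hq; rewrite /content /= => e.
  wlog hle : p1 p2 q1 q2 hp hq e / (p1 <= q1)%N.
    move=> W; case: (leqP p1 q1) => h; first exact: W.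
    symmetry; apply: W => //; lia.
  case: (eqVneq p1 q1) => [e1|ne]; first by subst; congr pair; lia.
  exfalso; have hPq := hPH _ hq.
  have [pp1 pp2] := in_diag_pos (hPH _ hp).
  have hin : forall a b, (p1 <= a <= q1)%N -> (p2 <= b <= q2)%N -> (a, b) \in H.
    move=> a b ha hb; apply: (skew (p1,p2)) => //=; try lia.
    apply: part_dc hPq _ _ _ _ => //; lia.
  apply: (hno (p1,p2)); rewrite /= hp !hin //; lia.
have [xb hxb hmax] := seq_argmax content hne.
have [xa hxa hmin] := seq_argmin content hne.
have hab : (content xa <= content xb)%R by apply: hmax.
have hcov : forall t, (content xa <= t)%R -> (t <= content xb)%R -> exists2 z, z \in H & content z = t.
  move=> t h1 h2; have [p [hp [hpm hl]]] := hconn xa xb hxa hxb.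
  have h2' : (t <= content (last xa p))%R by rewrite hl.
  have [z hz ez] := path_ivt hp h1 h2'.
  exists z => //; move: hz; rewrite inE => /orP[/eqP ->//|hz]; exact: (allP hpm).
set n := `|(content xb - content xa)%R|%N.+1.
have hperm : perm_eq (map content H) (intrange (content xa) n).
  apply: uniq_perm; [by rewrite map_inj_in_uniq|exact: intrange_uniq|].
  move=> t; rewrite intrange_mem; apply/mapP/idP.
  - case=> z hz ->; have := hmax _ hz; have := hmin _ hz; rewrite /n; lia.
  - move=> h; have [z hz ez] : exists2 z, z \in H & content z = t.
      by apply: hcov; rewrite /n in h; lia.
    by exists z.
have := perm_size hperm; rewrite size_map /intrange size_map size_iota => hs.
exists (content xb); split.
- case: xb hxb hmax {hab hcov n hperm hs} => r c hxb hmax.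
  have [hr hc] := in_diag_pos (hPH _ hxb).
  exists r, c; split => //; split; first by right; exact: hPH.
  split => //; apply/negP => h.
  have := hmax _ (skew _ (r, c.+1) hxb h (leqnn _) (leqnSn _)); rewrite contentS2 /content /=; lia.
- have -> : (content xb - (size H)%:Z = content xa - 1)%R by rewrite hs /n; lia.
  case: xa hxa hmin {hab hcov n hperm hs} => r c hxa hmin.
  have [hr hc] := in_diag_pos (hPH _ hxa).
  exists r, c; split => //; split; first by right; exact: hPH.
  split => //; apply/negP => h.
  have := hmin _ (skew _ (r.+1, c) hxa h (leqnSn _) (leqnn _)); rewrite contentS1 /content /=; lia.
Qed.

Lemma path_conn x p : path adj_cell x p -> cells_connected (x :: p).
Proof.
elim: p x => [|y p IH] x.
  move=> _ a b; rewrite !inE => /eqP -> /eqP ->; by exists [::].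
move=> /= /andP[hxy hp] a b ha hb.
have lift : forall q, all (mem (y :: p)) q -> all (mem (x :: y :: p)) q.
  move=> q; apply: sub_all => z /= hz; by rewrite inE hz orbT.
have IH' := IH y hp.
move: ha hb; rewrite [a \in _]in_cons [b \in _]in_cons => /orP[/eqP ea|ha] /orP[/eqP eb|hb].
- by subst; exists [::].
- subst a; have [q [hq [hqm hql]]] := IH' y b (mem_head _ _) hb.
  exists (y :: q); split; first by rewrite /= hxy hq.
  by split => //=; rewrite inE mem_head orbT /= lift.
- subst b; have [q [hq [hqm hql]]] := IH' a y ha (mem_head _ _).
  exists (rcons q x); split; first by rewrite rcons_path hq hql adj_sym.
  split; last by rewrite last_rcons.
  by rewrite all_rcons lift // andbT; exact: (mem_head x (y :: p)).
- have [q [hq [hqm hql]]] := IH' a b ha hb.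
  by exists q; split => //; split => //; rewrite lift.
Qed.

Section Hook.
Variables (lam : seq nat) (L : nat) (s : int).
Hypothesis hp : is_partition lam.
Hypothesis hL : (0 < L)%N.
Hypothesis hV : Vp (in_diag lam) s.
Hypothesis hH : Hp (in_diag lam) (s - L%:Z)%R.
Local Notation P := (in_diag lam).

Definition nextc (x : cell) : cell := if P (x.1.+1, x.2) then (x.1.+1, x.2) else (x.1, x.2.-1).
Fixpoint walk x n := if n is n'.+1 then x :: walk (nextc x) n' else [::].
Definition good (x : cell) := P x && ~~ P (x.1.+1, x.2.+1).

Lemma size_walk n x : size (walk x n) = n.
Proof. by elim: n x => [|n IH] x //=; rewrite IH. Qed.

Lemma step x : good x -> (s - L%:Z <= content x - 2)%R ->
  [/\ good (nextc x), content (nextc x) = (content x - 1)%R & adj_cell x (nextc x)].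
Proof.
case: x => r c /andP[hPx hn] hs.
have [hr hc] := in_diag_pos hPx.
rewrite /nextc /=; case hP: (P (r.+1, c)).
- split.
  + rewrite /good /= hP /=; apply/negP => h; move/negP: hn; apply.
    apply: part_dc h _ _ _ _ => //; lia.
  + by rewrite contentS1.
  + by rewrite /adj_cell /= !eqxx orbT.
- have hc2 : (1 < c)%N.
    case: (leqP c 1) => // hc1.
    have ec : c = 1%N by lia.
    subst c; case: hH => r2 [c2 [g1 [g2 [g3 g4]]]].
    move: hs; rewrite -g4 /content /= => hs.
    case: g2 => [hr2|hP2]; first by lia.
    suff : P (r.+1, 1%N) by rewrite hP.
    apply: part_dc hP2 _ _ _ _ => //; lia.
  split.
  + rewrite /good /= prednK; last lia.
    rewrite hP andbT; apply: part_dc hPx _ _ _ _ => //; lia.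
  + rewrite /content /=; lia.
  + rewrite /adj_cell /= eqxx /=; apply/orP; left; apply/orP; right; lia.
Qed.

Lemma walk_props n x : good x -> (s - L%:Z <= content x - n.+1%:Z)%R ->
  [/\ (forall z, z \in walk x n.+1 -> [/\ good z, (content x - n.+1%:Z < content z)%R & (content z <= content x)%R]),
      uniq (walk x n.+1), path adj_cell x (walk (nextc x) n)
    & (forall t, (content x - n.+1%:Z < t)%R -> (t <= content x)%R -> exists2 z, z \in walk x n.+1 & content z = t)].
Proof.
elim: n x => [|n IH] x hg hs.
  split => //=.
  - by move=> z; rewrite inE => /eqP ->; split => //; lia.
  - move=> t h1 h2; exists x; rewrite ?inE //; lia.
have hs2 : (s - L%:Z <= content x - 2)%R by lia.
have [hgy ecy hadj] := step hg hs2.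
have hs3 : (s - L%:Z <= content (nextc x) - n.+1%:Z)%R by rewrite ecy; lia.
have [Hm Hu Hp Ht] := IH (nextc x) hgy hs3.
split.
- move=> z; rewrite inE => /orP[/eqP ->|hz]; first by split => //; lia.
  have [g1 g2 g3] := Hm z hz; split => //; rewrite ecy in g2 g3; lia.
- change (uniq (x :: walk (nextc x) n.+1)); rewrite cons_uniq Hu andbT; apply/negP => hx.
  have [_ _ h] := Hm x hx; rewrite ecy in h; lia.
- by rewrite /= hadj Hp.
- move=> t h1 h2; case: (eqVneq t (content x)) => [->|ne]; first by exists x => //; exact: mem_head.
  have t1 : (content (nextc x) - n.+1%:Z < t)%R by rewrite ecy; lia.
  have t2 : (t <= content (nextc x))%R by rewrite ecy; lia.
  have [z hz ez] := Ht t t1 t2.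
  by exists z => //; rewrite inE hz orbT.
Qed.

Lemma diag_uniq y w : good y -> good w -> content y = content w -> y = w.
Proof.
case: y => y1 y2; case: w => w1 w2 /andP[hy hy'] /andP[hw hw']; rewrite /content /= => e.
have [? ?] := in_diag_pos hy; have [? ?] := in_diag_pos hw.
rewrite /= in hy' hw'.
case: (ltngtP y1 w1) => h.
- move/negP: hy'; case; apply: part_dc hw _ _ _ _ => //; lia.
- move/negP: hw'; case; apply: part_dc hy _ _ _ _ => //; lia.
- subst; congr pair; lia.
Qed.

Lemma hook_of_VH : exists H, size H = L /\ rim_hook lam H.
Proof.
case: hV => r0 [c0 [hr0 [hA [hB hk]]]].
have hc0 : c0 <> 0%N.
  move=> ec; subst c0; case: hH => r2 [c2 [g1 [g2 [g3 g4]]]].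
  move: g4; rewrite -hk /content /= => g4.
  case: g2 => [hr2|hP2]; first by lia.
  move/negP: hB; apply; apply: part_dc hP2 _ _ _ _ => //; lia.
have hP0 : P (r0, c0) by case: hA.
have hg0 : good (r0, c0).
  rewrite /good hP0 /=; apply/negP => h; move/negP: hB; apply.
  apply: part_dc h _ _ _ _ => //; lia.
have [L' eL] : exists L', L = L'.+1 by exists L.-1; lia.
have hH' := hH.
have hs0 : (s - L%:Z <= content (r0,c0) - L'.+1%:Z)%R by rewrite hk eL.
have [Hm Hu Hpath Ht] := walk_props hg0 hs0.
set H := walk (r0, c0) L'.+1.
exists H; split; first by rewrite size_walk eL.
have hmem : forall z, z \in H -> [/\ good z, (s - L%:Z < content z)%R & (content z <= s)%R].
  by move=> z hz; have [? ? ?] := Hm z hz; rewrite -hk eL.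
have hrange : forall t, (s - L%:Z < t)%R -> (t <= s)%R -> exists2 z, z \in H & content z = t.
  by move=> t h1 h2; apply: Ht; rewrite hk -?eL.
have ingood : forall y, good y -> (s - L%:Z < content y)%R -> (content y <= s)%R -> y \in H.
  move=> y hy h1 h2; have [w hw ew] := hrange _ h1 h2.
  have [hgw _ _] := hmem w hw; by rewrite (diag_uniq hy hgw (esym ew)).
split => //; split => //; split.
  apply/allP => z hz; have [/andP[? _] _ _] := hmem z hz; done.
split.
  apply: (@young_of _ (bl lam)).
  - by move=> r c /andP[h _]; apply: in_diag_pos h.
  - apply: local_dc.
    + by move=> r c /andP[h _]; apply: in_diag_pos h.
    + move=> r c /andP[hP1 hn1] hr; apply/andP; split.
        have [? ?] := in_diag_pos hP1; apply: part_dc hP1 _ _ _ _ => //; lia.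
      apply/negP => hz; have [/andP[hPz hnz] h1 h2] := hmem _ hz.
      have hgy : good (r.+1, c).
        rewrite /good hP1 /=; apply/negP => h; move/negP: hnz; apply.
        apply: part_dc h _ _ _ _ => //; lia.
      case: (ltrP (s - L%:Z) (content (r.+1,c))) => hc.
      * move/negP: hn1; apply; apply: ingood => //; rewrite contentS1; lia.
      * apply: (VH_excl (part_dc hp) _ hH').
        exists r.+1, c; split => //; split; first by right.
        split => //; move: hc h1; rewrite contentS1; lia.
    + move=> r c /andP[hP1 hn1] hc; apply/andP; split.
        have [? ?] := in_diag_pos hP1; apply: part_dc hP1 _ _ _ _ => //; lia.
      apply/negP => hz; have [/andP[hPz hnz] h1 h2] := hmem _ hz.
      have hgy : good (r, c.+1).
        rewrite /good hP1 /=; apply/negP => h; move/negP: hnz; apply.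
        apply: part_dc h _ _ _ _ => //; lia.
      case: (lerP (content (r,c.+1)) s) => hc'.
      * move/negP: hn1; apply; apply: ingood => //; rewrite contentS2; lia.
      * have ez : (r, c) = (r0, c0).
          apply: diag_uniq => //; first by rewrite /good hPz hnz.
          move: hc'; rewrite contentS2 hk; lia.
        case: ez => er ec; subst r c; by rewrite hP1 in hB.
  - by move=> r c /andP[h _]; apply: bnd_diag.
split.
  rewrite /H /=; exact: path_conn Hpath.
move=> x /= /and4P[hx _ _ h4].
rewrite andbT in h4.
have [/andP[_ hn] _ _] := hmem x hx; have [/andP[hP4 _] _ _] := hmem _ h4.
by rewrite hP4 in hn.
Qed.

End Hook.

Theorem proposition4p11 (l : nat) (hl : (1 < l)%N) :
  (* T_i is well defined on partitions *)
  (forall (mu : seq nat) (i : nat), is_partition mu -> (i < l)%N ->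
     exists nu, T_spec l i mu nu) /\
  (* d(sigma_i * mu) = sigma_i * d(mu) *)
  (forall (mu nu : seq nat) (i : nat), is_partition mu -> (i < l)%N ->
     T_spec l i mu nu ->
     forall j, (j < l)%N -> dvec l nu j = sigma_act l i (dvec l mu) j) /\
  (* restriction to l-cores: sigma_i maps cores to cores, equivariantly *)
  (forall (nu nu' : seq nat) (i : nat), is_partition nu -> is_core l nu ->
     (i < l)%N -> T_spec l i nu nu' ->
     is_core l nu' /\
     forall j, (j < l)%N -> dvec l nu' j = sigma_act l i (dvec l nu) j).
Proof.
split; [|split].
- move=> mu i hp hi; exact: T_exists.
- move=> mu nu i hp hi hT j hj; exact: equivariance.
- move=> nu nu' i hp hcore hi hT; split; last first.
    by move=> j hj; exact: equivariance.
  move=> [H [hs hH]].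
  have hp' : is_partition nu' by case: hT.
  have [b [hVb hHb]] := hook_VH hp' hH.
  rewrite hs in hHb.
  have hQ := T_specE hp hT.
  have V1 := V_T hl hp hQ hVb.
  have H1 := H_T hl hp hQ hHb.
  rewrite tau_shift in H1.
  apply: hcore; exact: (hook_of_VH hp (ltnW hl) V1 H1).
Qed.
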